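(* Let $X$ be the real harmonizable multifractional stable process and $T>0$. There exist $\delta,C_1,C_2>0$ such that for all $t,s\in[0,T]$ with $|t-s|<\delta$, $$C_1|t-s|^{\hat H(t,s)}\le\|X(t)-X(s)\|_\alpha\le C_2|t-s|^{\check H(t,s)},$$ where $\hat H(t,s)=\min_{u\in[s\wedge t,s\vee t]}H(u)$ and $\check H(t,s)=\max_{u\in[s\wedge t,s\vee t]}H(u)$.
   Context: Fix $\alpha\in(1,2)$. $M$ is an independently scattered rotationally invariant complex S$\alpha$S random measure on $\mathbb R$ with Lebesgue control measure: for every Borel $A$ and $\theta\in\mathbb R$, $e^{i\theta}M(A)\overset{d}{=}M(A)$, $\mathbb E e^{iu\,\mathrm{Re} M(A)}=e^{-\lambda(A)|u|^\alpha}$; values on disjoint Borel subsets of $[0,\infty)$ are independent; $M(-A)=\overline{M(A)}$. For $f$ with $f(-x)=\overline{f(x)}$, $f\in L^\alpha(\mathbb R)$, $\int f\,dM$ is real S$\alpha$S with $\mathbb E\exp(iu\int f dM)=\exp(-|u|^\alpha\|f\|^\alpha_{L^\alpha})$; $\|\xi\|_\alpha^\alpha:=-\log\mathbb Ee^{i\xi}$, so $\|\int f dM\|_\alpha=\|f\|_{L^\alpha}$. The Hurst function $H:[0,\infty)\to\mathbb R$ satisfies $0<\hat H:=\inf_t H(t)\le\sup_tH(t)=:\check H<1$, and there are $C>0$ and $\gamma>\check H$ with $|H(t)-H(s)|\le C|t-s|^\gamma$ for all $t,s\ge0$. The real harmonizable multifractional stable process (rhmsp) is $X(t)=\int_{\mathbb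 R}\frac{e^{itx}-1}{|x|^{1/\alpha+H(t)}}M(dx)$, $t\ge0$. *)

(* Defs.v *)
From Stdlib Require Import Reals Lra.
Open Scope R_scope.

(* x^p for x >= 0 with the convention 0^p = 0 (p > 0 in all uses). *)
Definition rpow0 (x p : R) : R :=
  if Req_EM_T x 0 then 0 else Rpower x p.

(* Kernel f_t(x) = (e^{itx}-1)/|x|^{1/alpha + H(t)}: real and imaginary parts (x <> 0). *)
Definition kerRe (alpha : R) (H : R -> R) (t x : R) : R :=
  (cos (t * x) - 1) / Rpower (Rabs x) (/ alpha + H t).
Definition kerIm (alpha : R) (H : R -> R) (t x : R) : R :=
  sin (t * x) / Rpower (Rabs x) (/ alpha + H t).

(* |f_t(x) - f_s(x)|^alpha *)
Definition rhmsp_integrand (alpha : R) (H : R -> R) (t s x : R) : R :=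
  rpow0 ((kerRe alpha H t x - kerRe alpha H s x) ^ 2
         + (kerIm alpha H t x - kerIm alpha H s x) ^ 2) (alpha / 2).

(* Improper Riemann integral over R of g (possibly singular at 0 and at +-oo):
   lim_{a -> 0+, b -> +oo} (int_{-b}^{-a} g + int_a^b g) = L. *)
Definition ImproperIntegralR (g : R -> R) (L : R) : Prop :=
  forall eps, 0 < eps ->
    exists a0 b0, 0 < a0 < b0 /\
      forall a b, 0 < a < a0 -> b0 < b ->
        exists (p1 : Riemann_integrable g (- b) (- a))
               (p2 : Riemann_integrable g a b),
          Rabs (RiemannInt p1 + RiemannInt p2 - L) < eps.

(* N is the scale parameter ||X(t)-X(s)||_alpha = ||f_t - f_s||_{L^alpha}. *)
Definition rhmsp_incr_norm (alpha : R) (H : R -> R) (t s N : R) : Prop :=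
  exists L, ImproperIntegralR (rhmsp_integrand alpha H t s) L /\ N = rpow0 L (/ alpha).

Definition IsMinOn (H : R -> R) (a b m : R) : Prop :=
  (exists u, a <= u <= b /\ H u = m) /\ (forall u, a <= u <= b -> m <= H u).
Definition IsMaxOn (H : R -> R) (a b m : R) : Prop :=
  (exists u, a <= u <= b /\ H u = m) /\ (forall u, a <= u <= b -> H u <= m).

(* Main.v *)
Require Import Defs.
From Stdlib Require Import Reals Lra.
From Coquelicot Require Import Coquelicot.
Open Scope R_scope.

Lemma rp_pos x c : 0 < x -> rpow0 x c = Rpower x c.
Proof. intros. unfold rpow0. destruct (Req_EM_T x 0); [lra|auto]. Qed.
Lemma rp_0 c : rpow0 0 c = 0.
Proof. unfold rpow0. destruct (Req_EM_T 0 0); [auto|lra]. Qed.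
Lemma Rpower_pos x c : 0 < Rpower x c.
Proof. unfold Rpower. apply exp_pos. Qed.
Lemma rp_nonneg x c : 0 <= rpow0 x c.
Proof. unfold rpow0. destruct (Req_EM_T x 0); [lra|]. left; apply Rpower_pos. Qed.
Lemma rp_le a b c : 0 <= c -> 0 <= a <= b -> rpow0 a c <= rpow0 b c.
Proof. intros. destruct (Req_dec a 0). subst. rewrite rp_0. apply rp_nonneg.
  rewrite !rp_pos by lra. apply Rle_Rpower_l; lra. Qed.
Lemma rp_mul a b c : 0 <= a -> 0 <= b -> rpow0 (a*b) c = rpow0 a c * rpow0 b c.
Proof. intros. destruct (Req_dec a 0). subst. rewrite Rmult_0_l, !rp_0; ring.
  destruct (Req_dec b 0). subst. rewrite Rmult_0_r, !rp_0; ring.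
  rewrite !rp_pos by nra. rewrite Rpower_mult_distr by lra. auto. Qed.
Lemma rp_rp a c d : 0 <= a -> rpow0 (rpow0 a c) d = rpow0 a (c*d).
Proof. intros. destruct (Req_dec a 0). subst. rewrite !rp_0; auto.
  rewrite (rp_pos a c) by lra. rewrite (rp_pos _ d) by apply Rpower_pos.
  rewrite rp_pos by lra. apply Rpower_mult. Qed.
Lemma rp_plus a c d : 0 < a -> rpow0 a (c+d) = rpow0 a c * rpow0 a d.
Proof. intros. rewrite !rp_pos by lra. rewrite Rpower_plus; ring. Qed.
Lemma rp_one a : 0 <= a -> rpow0 a 1 = a.
Proof. intros. destruct (Req_dec a 0). subst. apply rp_0. rewrite rp_pos by lra. apply Rpower_1; lra. Qed.
Lemma rp_opp a c : 0 < a -> rpow0 a (-c) = / rpow0 a c.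
Proof. intros. rewrite !rp_pos by lra. apply Rpower_Ropp. Qed.
Lemma rp_two_le c : 0 <= c <= 1 -> rpow0 2 c <= 2.
Proof. intros. rewrite rp_pos by lra. rewrite <- (Rpower_1 2) at 2 by lra.
  apply Rle_Rpower; lra. Qed.
Lemma rp_sum a b c : 0 <= a -> 0 <= b -> 0 <= c <= 1 ->
  rpow0 (a+b) c <= 2 * (rpow0 a c + rpow0 b c).
Proof. intros. pose proof (rp_nonneg a c). pose proof (rp_nonneg b c).
  destruct (Rle_dec a b).
  - apply Rle_trans with (rpow0 (2*b) c). apply rp_le; lra.
    rewrite rp_mul by lra. pose proof (rp_two_le c H1). nra.
  - apply Rle_trans with (rpow0 (2*a) c). apply rp_le; lra.
    rewrite rp_mul by lra. pose proof (rp_two_le c H1). nra. Qed.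
Lemma rp_le_exp_small x c d : 0 < x <= 1 -> c <= d -> rpow0 x d <= rpow0 x c.
Proof. intros. rewrite !rp_pos by lra. unfold Rpower.
  destruct (Rle_lt_or_eq_dec _ _ H0). 2: subst; lra.
  assert (ln x <= 0). { destruct (Req_dec x 1). subst; rewrite ln_1; lra.
    rewrite <- ln_1. left; apply ln_increasing; lra. }
  destruct (Rle_lt_or_eq_dec _ _ H1). 2: rewrite e, !Rmult_0_r; lra.
  left; apply exp_increasing. nra. Qed.
Lemma rp_le_exp_big x c d : 1 <= x -> c <= d -> rpow0 x c <= rpow0 x d.
Proof. intros. rewrite !rp_pos by lra. apply Rle_Rpower; lra. Qed.
Lemma rp_lt_one_pos x c : 0 < x -> 0 < rpow0 x c.
Proof. intros. rewrite rp_pos by lra. apply Rpower_pos. Qed.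

Lemma exp_le x y : x <= y -> exp x <= exp y.
Proof. intros [H|H]. left; apply exp_increasing; auto. subst; lra. Qed.

Lemma Rpower_anti a c e : 0 < c <= a -> e <= 0 -> Rpower a e <= Rpower c e.
Proof. intros. unfold Rpower. apply exp_le. pose proof (ln_le c a ltac:(lra) ltac:(lra)). nra. Qed.

Lemma pow_is_derive x r : 0 < x -> r <> -1 ->
  is_derive (fun y => Rpower y (r+1) / (r+1)) x (Rpower x r).
Proof. intros Hx Hr.
  assert (H := derivable_pt_lim_power x (r+1) Hx).
  apply is_derive_Reals in H.
  apply (is_derive_scal_l _ _ _ (/(r+1))) in H.
  assert (E: Rpower x r = scal ((r+1) * Rpower x (r+1-1)) (/(r+1))).
  { unfold scal; simpl; unfold mult; simpl. replace (r+1-1) with r by ring.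
    field. intro; apply Hr; lra. }
  rewrite E. eapply is_derive_ext; [|exact H]. intros; reflexivity. Qed.

Lemma Rpower_cont x r : 0 < x -> continuous (fun y => Rpower y r) x.
Proof. intros. apply continuity_pt_filterlim. apply derivable_continuous_pt.
  exists (r * Rpower x (r-1)). apply derivable_pt_lim_power; auto. Qed.

Definition F (a b r : R) := (Rpower b (r+1) - Rpower a (r+1)) / (r+1).

Lemma is_RInt_pow a b r : 0 < a <= b -> r <> -1 ->
  is_RInt (fun x => Rpower x r) a b (F a b r).
Proof. intros. unfold F.
  replace ((Rpower b (r + 1) - Rpower a (r + 1)) / (r + 1)) with
    (minus ((fun y => Rpower y (r+1) / (r+1)) b) ((fun y => Rpower y (r+1) / (r+1)) a)).
  2:{ unfold minus, plus, opp; simpl. field. intro; apply H0; lra. }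
  apply (@is_RInt_derive R_CompleteNormedModule (fun y => Rpower y (r+1) / (r+1)) (fun x => Rpower x r)).
  - intros. rewrite Rmin_left, Rmax_right in H1 by lra. apply pow_is_derive; auto; lra.
  - intros. rewrite Rmin_left, Rmax_right in H1 by lra. apply Rpower_cont; lra. Qed.

Lemma RInt_bound2 g a b K1 K2 r1 r2 : 0 < a <= b -> ex_RInt g a b ->
  r1 <> -1 -> r2 <> -1 ->
  (forall x, a < x < b -> g x <= K1 * Rpower x r1 + K2 * Rpower x r2) ->
  RInt g a b <= K1 * F a b r1 + K2 * F a b r2.
Proof. intros.
  assert (Hi : is_RInt (fun x => K1 * Rpower x r1 + K2 * Rpower x r2) a b
     (K1 * F a b r1 + K2 * F a b r2)).
  { apply (is_RInt_plus (fun x => K1 * Rpower x r1) (fun x => K2 * Rpower x r2)).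
    apply (is_RInt_scal (fun x => Rpower x r1)). apply is_RInt_pow; auto.
    apply (is_RInt_scal (fun x => Rpower x r2)). apply is_RInt_pow; auto. }
  rewrite <- (is_RInt_unique _ _ _ _ Hi).
  apply RInt_le; auto. lra. eexists; eauto. Qed.

Lemma F_up a b c r : r > -1 -> 0 < a <= b -> b <= c -> F a b r <= Rpower c (r+1) / (r+1).
Proof. intros. unfold F. pose proof (Rpower_pos a (r+1)).
  pose proof (Rle_Rpower_l b c (r+1) ltac:(lra) ltac:(lra)).
  apply Rmult_le_compat_r. left; apply Rinv_0_lt_compat; lra. lra. Qed.

Lemma F_down a b c r : r < -1 -> 0 < c <= a -> a <= b -> F a b r <= Rpower c (r+1) / (-(r+1)).
Proof. intros. unfold F. pose proof (Rpower_pos b (r+1)).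
  pose proof (Rpower_anti a c (r+1) ltac:(lra) ltac:(lra)).
  replace ((Rpower b (r + 1) - Rpower a (r + 1)) / (r + 1)) with
    ((Rpower a (r + 1) - Rpower b (r + 1)) / (-(r + 1))) by (field; lra).
  apply Rmult_le_compat_r. left; apply Rinv_0_lt_compat; lra. lra. Qed.

Lemma exR (g : R -> R) a b : (forall x, x <> 0 -> continuous g x) -> 0 < a <= b -> ex_RInt g a b.
Proof. intros Hc H. apply (@ex_RInt_continuous R_CompleteNormedModule). intros.
  rewrite Rmin_left, Rmax_right in H0 by lra. apply Hc; lra. Qed.
Lemma exRn (g : R -> R) a b : (forall x, x <> 0 -> continuous g x) -> 0 < a <= b -> ex_RInt g (-b) (-a).
Proof. intros Hc H. apply (@ex_RInt_continuous R_CompleteNormedModule). intros.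
  rewrite Rmin_left, Rmax_right in H0 by lra. apply Hc; lra. Qed.

Lemma RInt_sym (g : R -> R) a b : (forall x, x <> 0 -> continuous g x) -> (forall x, g (-x) = g x) ->
  0 < a <= b -> RInt g (-b) (-a) = RInt g a b.
Proof. intros Hc He H.
  assert (H1 : ex_RInt g (-1*a+0) (-1*b+0)).
  { replace (-1*a+0) with (-a) by ring. replace (-1*b+0) with (-b) by ring.
    apply ex_RInt_swap. apply exRn; auto. }
  pose proof (@RInt_comp_lin R_CompleteNormedModule g (-1) 0 a b H1) as E.
  replace (-1*a+0) with (-a) in E by ring. replace (-1*b+0) with (-b) in E by ring.
  rewrite (RInt_ext _ (fun y => opp (g y))) in E.
  2:{ intros. unfold scal; simpl; unfold mult, opp; simpl. replace (-1*x+0) with (-x) by ring.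
      rewrite He. ring. }
  rewrite (@RInt_opp R_CompleteNormedModule) in E by (apply exR; auto).
  rewrite <- (@opp_RInt_swap R_CompleteNormedModule g (-b) (-a)) in E by (apply exRn; auto).
  unfold opp in E; simpl in E. lra. Qed.

Lemma RInt_mono (g : R -> R) a a1 b1 b : (forall x, x <> 0 -> continuous g x) -> (forall x, 0 <= g x) ->
  0 < a <= a1 -> a1 <= b1 -> b1 <= b -> RInt g a1 b1 <= RInt g a b.
Proof. intros Hc Hp H1 H2 H3.
  rewrite <- (@RInt_Chasles R_CompleteNormedModule g a a1 b) by (apply exR; auto; lra).
  rewrite <- (@RInt_Chasles R_CompleteNormedModule g a1 b1 b) by (apply exR; auto; lra).
  unfold plus; simpl.
  assert (0 <= RInt g a a1) by (apply RInt_ge_0; [lra|apply exR; auto; lra|auto]).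
  assert (0 <= RInt g b1 b) by (apply RInt_ge_0; [lra|apply exR; auto; lra|auto]).
  lra. Qed.

Lemma improper (g : R -> R) M :
  (forall x, x <> 0 -> continuous g x) -> (forall x, g (-x) = g x) -> (forall x, 0 <= g x) ->
  (forall a b, 0 < a <= b -> RInt g a b <= M) ->
  exists L, ImproperIntegralR g L /\ L <= 2*M /\
    forall a b, 0 < a <= b -> 2 * RInt g a b <= L.
Proof. intros Hc He Hp HM.
  set (E := fun y => exists a b, 0 < a <= b /\ y = RInt g a b).
  assert (HB : bound E). { exists M. intros y [a [b [Hab ->]]]. auto. }
  assert (HE : exists y, E y). { exists (RInt g 1 1). exists 1, 1. split; auto; lra. }
  destruct (completeness E HB HE) as [S [HS1 HS2]].
  assert (SM : S <= M). { apply HS2. intros y [a [b [Hab ->]]]. auto. }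
  exists (2*S). split; [|split; [lra|]].
  2:{ intros a b Hab. assert (RInt g a b <= S) by (apply HS1; exists a, b; auto). lra. }
  intros eps Heps.
  assert (Hex : exists a1 b1, 0 < a1 <= b1 /\ S - eps/2 < RInt g a1 b1).
  { apply Classical_Prop.NNPP. intro Hn.
    assert (S <= S - eps/2). 2: lra.
    apply HS2. intros y [a [b [Hab ->]]].
    apply Rnot_lt_le. intro Hl. apply Hn. exists a, b. auto. }
  destruct Hex as [a1 [b1 [Hab1 Hl]]].
  exists a1, (b1+1). split; [lra|]. intros a b Ha Hb.
  assert (Hab : 0 < a <= b) by lra.
  exists (ex_RInt_Reals_0 _ _ _ (exRn g a b Hc Hab)).
  exists (ex_RInt_Reals_0 _ _ _ (exR g a b Hc Hab)).
  rewrite <- !RInt_Reals. rewrite RInt_sym by auto.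
  assert (RInt g a1 b1 <= RInt g a b) by (apply RInt_mono; auto; lra).
  assert (RInt g a b <= S) by (apply HS1; exists a, b; auto).
  apply Rabs_def1; lra. Qed.

Lemma trig_id a b : (cos a - cos b)^2 + (sin a - sin b)^2 = 2 - 2 * cos (a - b).
Proof. rewrite cos_minus. pose proof (sin2_cos2 a). pose proof (sin2_cos2 b).
  unfold Rsqr in *. nra. Qed.

Lemma trig_id1 b : (cos b - 1)^2 + (sin b)^2 = 2 - 2 * cos b.
Proof. pose proof (sin2_cos2 b). unfold Rsqr in *. nra. Qed.

Lemma sin_abs_le z : Rabs (sin z) <= Rabs z.
Proof. destruct (Rtotal_order z 0) as [H|[H|H]].
  - rewrite <- (Ropp_involutive z). rewrite sin_neg, !Rabs_Ropp.
    pose proof (sin_lt_x (-z) ltac:(lra)). pose proof (SIN_bound (-z)).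
    assert (Hs: -z < 1 -> 0 < sin (-z)). { intros; apply sin_gt_0; pose proof PI_RGT_0; pose proof PI2_1; lra. }
    destruct (Rlt_dec (-z) 1) as [Hr|Hr]; [pose proof (Hs Hr)|];
    unfold Rabs; destruct Rcase_abs; destruct Rcase_abs; lra.
  - subst. rewrite sin_0. lra.
  - pose proof (sin_lt_x z H). pose proof (SIN_bound z).
    assert (Hs: z < 1 -> 0 < sin z). { intros; apply sin_gt_0; pose proof PI_RGT_0; pose proof PI2_1; lra. }
    destruct (Rlt_dec z 1) as [Hr|Hr]; [pose proof (Hs Hr)|];
    unfold Rabs; destruct Rcase_abs; destruct Rcase_abs; lra. Qed.

Lemma W_le_sq y : 2 - 2 * cos y <= y^2.
Proof. replace y with (2 * (y/2)) at 1 by field. rewrite cos_2a_sin.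
  pose proof (sin_abs_le (y/2)). assert (sin (y/2) ^2 <= (y/2)^2).
  { rewrite <- (pow2_abs (sin _)), <- (pow2_abs (y/2)). pose proof (Rabs_pos (sin (y/2))). nra. }
  nra. Qed.

Lemma W_le_4 y : 2 - 2 * cos y <= 4.
Proof. pose proof (COS_bound y). lra. Qed.
Lemma W_ge_0 y : 0 <= 2 - 2 * cos y.
Proof. pose proof (COS_bound y). lra. Qed.

Lemma W_ge y : 1 <= Rabs y <= 2 -> 4/5 <= 2 - 2 * cos y.
Proof. intros.
  assert (cos y = cos (Rabs y)). { unfold Rabs; destruct Rcase_abs; auto. rewrite cos_neg; auto. }
  rewrite H0. set (z := Rabs y) in *.
  destruct (pre_cos_bound z 0 ltac:(lra) ltac:(lra)) as [_ Hc].
  replace (2 * (0+1))%nat with 2%nat in Hc by reflexivity.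
  unfold cos_approx, cos_term in Hc. simpl in Hc.
  assert (1 <= z^2) by nra. assert (z^2 <= 4) by nra.
  assert ((z^2-1)*(z^2-4) <= 0) by nra.
  assert (1 - z^2/2 + z^4/24 <= 3/5) by nra. lra. Qed.

Lemma sq_sum_le a b : (a+b)^2 <= 2*a^2 + 2*b^2.
Proof. pose proof (pow2_ge_0 (a+2*b)). pose proof (pow2_ge_0 (a-b)). nra. Qed.
Lemma sq_sum_ge a b : a^2/2 - b^2 <= (a+b)^2.
Proof. pose proof (pow2_ge_0 (a+2*b)). pose proof (pow2_ge_0 (a-b)). nra. Qed.

Lemma alg_upper ct st cs ss u v :
  ((ct-1)*u - (cs-1)*v)^2 + (st*u - ss*v)^2 <=
  2*u^2*((ct-cs)^2+(st-ss)^2) + 2*(u-v)^2*((cs-1)^2+ss^2).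
Proof.
  replace ((ct-1)*u - (cs-1)*v) with (u*(ct-cs) + (u-v)*(cs-1)) by ring.
  replace (st*u - ss*v) with (u*(st-ss) + (u-v)*ss) by ring.
  pose proof (sq_sum_le (u*(ct-cs)) ((u-v)*(cs-1))).
  pose proof (sq_sum_le (u*(st-ss)) ((u-v)*ss)). nra. Qed.

Lemma alg_lower ct st cs ss u v :
  u^2*((ct-cs)^2+(st-ss)^2)/2 - (u-v)^2*((cs-1)^2+ss^2) <=
  ((ct-1)*u - (cs-1)*v)^2 + (st*u - ss*v)^2.
Proof.
  replace ((ct-1)*u - (cs-1)*v) with (u*(ct-cs) + (u-v)*(cs-1)) by ring.
  replace (st*u - ss*v) with (u*(st-ss) + (u-v)*ss) by ring.
  pose proof (sq_sum_ge (u*(ct-cs)) ((u-v)*(cs-1))).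
  pose proof (sq_sum_ge (u*(st-ss)) ((u-v)*ss)). nra. Qed.

Definition uu (alpha : R) (H : R -> R) (t x : R) := Rpower x (-(/alpha + H t)).

Lemma kerRe_eq (alpha : R) (H : R -> R) t x : 0 < x -> kerRe alpha H t x = (cos (t*x) - 1) * uu alpha H t x.
Proof. intros. unfold kerRe, uu. rewrite Rabs_right by lra. rewrite Rpower_Ropp. auto. Qed.
Lemma kerIm_eq (alpha : R) (H : R -> R) t x : 0 < x -> kerIm alpha H t x = sin (t*x) * uu alpha H t x.
Proof. intros. unfold kerIm, uu. rewrite Rabs_right by lra. rewrite Rpower_Ropp. auto. Qed.

Definition SS (alpha : R) (H : R -> R) t s x := (kerRe alpha H t x - kerRe alpha H s x) ^ 2
         + (kerIm alpha H t x - kerIm alpha H s x) ^ 2.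

Lemma SS_upper (alpha : R) (H : R -> R) t s x : 0 < x ->
  SS alpha H t s x <= 2 * uu alpha H t x ^2 * (2 - 2 * cos ((t-s)*x)) + 2 * (uu alpha H t x - uu alpha H s x)^2 * (2 - 2 * cos (s*x)).
Proof. intros. unfold SS. rewrite !kerRe_eq, !kerIm_eq by auto.
  replace ((t-s)*x) with (t*x - s*x) by ring. rewrite <- trig_id, <- trig_id1.
  replace ((cos (t * x) - 1) * uu alpha H t x - (cos (s * x) - 1) * uu alpha H s x) with
     ((cos (t * x) - 1) * uu alpha H t x - (cos (s * x) - 1) * uu alpha H s x) by ring.
  replace (sin (t * x) * uu alpha H t x - sin (s * x) * uu alpha H s x) with
     (sin (t * x) * uu alpha H t x - sin (s * x) * uu alpha H s x) by ring.
  apply alg_upper. Qed.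

Lemma SS_lower (alpha : R) (H : R -> R) t s x : 0 < x ->
  uu alpha H t x ^2 * (2 - 2 * cos ((t-s)*x)) / 2 - (uu alpha H t x - uu alpha H s x)^2 * (2 - 2 * cos (s*x)) <= SS alpha H t s x.
Proof. intros. unfold SS. rewrite !kerRe_eq, !kerIm_eq by auto.
  replace ((t-s)*x) with (t*x - s*x) by ring. rewrite <- trig_id, <- trig_id1.
  apply alg_lower. Qed.

Lemma integrand_eq (alpha : R) (H : R -> R) t s x : rhmsp_integrand alpha H t s x = rpow0 (SS alpha H t s x) (alpha/2).
Proof. reflexivity. Qed.

Lemma SS_nonneg (alpha : R) (H : R -> R) t s x : 0 <= SS alpha H t s x.
Proof. unfold SS. pose proof (pow2_ge_0 (kerRe alpha H t x - kerRe alpha H s x)).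
  pose proof (pow2_ge_0 (kerIm alpha H t x - kerIm alpha H s x)). lra. Qed.

Lemma SS_even (alpha : R) (H : R -> R) t s x : SS alpha H t s (-x) = SS alpha H t s x.
Proof. unfold SS, kerRe, kerIm. rewrite Rabs_Ropp.
  replace (t * - x) with (- (t*x)) by ring. replace (s * - x) with (- (s*x)) by ring.
  rewrite !cos_neg, !sin_neg. unfold Rdiv. ring. Qed.


Lemma cont_Rpower_abs e x : x <> 0 -> continuity_pt (fun y => Rpower (Rabs y) e) x.
Proof. intros. apply (continuity_pt_comp Rabs (fun y => Rpower y e)).
  apply Rcontinuity_abs. apply continuity_pt_filterlim. apply Rpower_cont.
  apply Rabs_pos_lt; auto. Qed.

Lemma cont_phi c y : 0 < c -> continuity_pt (fun z => rpow0 (Rabs z) c) y.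
Proof. intros Hc. destruct (Req_dec y 0) as [->|Hy].
  - unfold continuity_pt, continue_in, limit1_in, limit_in. intros eps Heps.
    exists (Rpower eps (/c)). split. apply Rpower_pos.
    intros z [_ Hz]. simpl in *. unfold R_dist in *. rewrite Rabs_R0, rp_0.
    rewrite Rminus_0_r in *.
    destruct (Req_dec z 0) as [->|Hz0]. rewrite Rabs_R0, rp_0, Rabs_R0; lra.
    rewrite rp_pos by (apply Rabs_pos_lt; auto).
    rewrite Rabs_right by (left; apply Rpower_pos).
    replace eps with (Rpower (Rpower eps (/c)) c).
    2:{ rewrite Rpower_mult. rewrite Rinv_l by lra. apply Rpower_1; lra. }
    apply Rlt_Rpower_l; auto. split; auto. apply Rabs_pos_lt; auto.
  - apply (continuity_pt_locally_ext (fun z => Rpower (Rabs z) c) _ (Rabs y)).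
    apply Rabs_pos_lt; auto.
    intros z Hz. unfold Rdist in Hz. rewrite rp_pos; auto. apply Rabs_pos_lt.
    intro; subst. rewrite Rminus_0_l, Rabs_Ropp in Hz. lra.
    apply cont_Rpower_abs; auto. Qed.

Lemma cont_lin t x : continuity_pt (fun y => t * y) x.
Proof. apply continuity_pt_mult. apply continuity_pt_const; intros ? ?; auto.
  apply derivable_continuous_pt, derivable_pt_id. Qed.

Lemma cont_kerRe alpha H t x : x <> 0 -> continuity_pt (kerRe alpha H t) x.
Proof. intros. unfold kerRe.
  apply (continuity_pt_div (fun y => cos (t*y) - 1) (fun y => Rpower (Rabs y) (/alpha + H t))).
  apply continuity_pt_minus. apply (continuity_pt_comp (fun y => t*y) cos).
  apply cont_lin. apply continuity_cos. apply continuity_pt_const; intros ? ?; auto.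
  apply cont_Rpower_abs; auto. apply Rgt_not_eq, Rpower_pos. Qed.

Lemma cont_kerIm alpha H t x : x <> 0 -> continuity_pt (kerIm alpha H t) x.
Proof. intros. unfold kerIm.
  apply (continuity_pt_div (fun y => sin (t*y)) (fun y => Rpower (Rabs y) (/alpha + H t))).
  apply (continuity_pt_comp (fun y => t*y) sin).
  apply cont_lin. apply continuity_sin.
  apply cont_Rpower_abs; auto. apply Rgt_not_eq, Rpower_pos. Qed.

Lemma cont_sq f x : continuity_pt f x -> continuity_pt (fun y => f y ^ 2) x.
Proof. intros. apply (continuity_pt_ext (mult_fct f f)). intros; unfold mult_fct; ring.
  apply continuity_pt_mult; auto. Qed.

Lemma cont_SS alpha H t s x : x <> 0 -> continuity_pt (SS alpha H t s) x.
Proof. intros. unfold SS.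
  apply (continuity_pt_plus (fun y => _ ^ 2) (fun y => _ ^ 2)); apply cont_sq; apply continuity_pt_minus;
    auto using cont_kerRe, cont_kerIm. Qed.

Lemma cont_integrand alpha H t s x : 0 < alpha -> x <> 0 ->
  continuous (rhmsp_integrand alpha H t s) x.
Proof. intros. apply continuity_pt_filterlim.
  apply (continuity_pt_ext (fun y => rpow0 (Rabs (SS alpha H t s y)) (alpha/2))).
  intros. rewrite Rabs_right. reflexivity. apply Rle_ge, SS_nonneg.
  apply (continuity_pt_comp (SS alpha H t s) (fun z => rpow0 (Rabs z) (alpha/2))).
  apply cont_SS; auto. apply cont_phi. lra. Qed.

Lemma exp_diff A B : Rabs (exp A - exp B) <= Rabs (A - B) * Rmax (exp A) (exp B).
Proof.
  assert (K : forall A B, A <= B -> exp B - exp A <= (B - A) * exp B).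
  { intros a b Hab. pose proof (exp_ineq1_le (a - b)).
    replace (exp a) with (exp b * exp (a - b)) by (rewrite <- exp_plus; f_equal; ring).
    pose proof (exp_pos b). nra. }
  destruct (Rle_dec A B).
  - pose proof (K A B r). pose proof (exp_le A B r).
    rewrite Rmax_right by auto. rewrite Rabs_left1 by lra. rewrite Rabs_left1 by lra. lra.
  - pose proof (K B A ltac:(lra)). pose proof (exp_le B A ltac:(lra)).
    rewrite Rmax_left by auto. rewrite Rabs_right by lra. rewrite Rabs_right by lra. lra. Qed.

Lemma Rpower_inv x y : 0 < x -> Rpower (/x) y = Rpower x (-y).
Proof. intros. unfold Rpower. rewrite ln_Rinv by auto. f_equal; ring. Qed.

Lemma Rpower_exp_small x c d : 0 < x <= 1 -> c <= d -> Rpower x d <= Rpower x c.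
Proof. intros. pose proof (rp_le_exp_small x c d H H0). rewrite !rp_pos in H1 by lra. auto. Qed.

Lemma Rpower_sq x e : Rpower x e ^ 2 = Rpower x (2*e).
Proof. replace (2*e) with (e+e) by ring. rewrite Rpower_plus. ring. Qed.

Lemma ln_bound_big x e : 1 <= x -> 0 < e -> ln x ^ 2 <= Rpower x (2*e) / e^2.
Proof. intros. assert (0 <= ln x). { rewrite <- ln_1. apply ln_le; lra. }
  assert (e * ln x <= Rpower x e).
  { rewrite <- ln_Rpower. pose proof (exp_ineq1_le (ln (Rpower x e))).
    rewrite exp_ln in H2 by apply Rpower_pos. lra. }
  assert (ln x <= Rpower x e / e). { apply (Rmult_le_reg_l e); auto. field_simplify; lra. }
  rewrite <- Rpower_sq. replace (Rpower x e ^ 2 / e ^ 2) with ((Rpower x e / e)^2) by (field; lra).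
  apply pow_incr; lra. Qed.

Lemma ln_bound_small x e : 0 < x <= 1 -> 0 < e -> ln x ^ 2 <= Rpower x (-(2*e)) / e^2.
Proof. intros. pose proof (ln_bound_big (/x) e). rewrite ln_Rinv, Rpower_inv in H1 by lra.
  replace (ln x ^2) with ((- ln x)^2) by ring. apply H1; auto.
  rewrite <- Rinv_1. apply Rinv_le_contravar; lra. Qed.

Lemma u_diff alpha H t s x : 0 < x ->
  Rabs (uu alpha H t x - uu alpha H s x) <=
  Rabs (H t - H s) * Rabs (ln x) * Rmax (uu alpha H t x) (uu alpha H s x).
Proof. intros. unfold uu, Rpower. eapply Rle_trans. apply exp_diff.
  right. f_equal. rewrite <- Rabs_mult, <- Rabs_Ropp. f_equal. ring. Qed.

Lemma uu_small alpha H t x hhi : 0 < x <= 1 -> H t <= hhi ->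
  uu alpha H t x <= Rpower x (-(/alpha + hhi)).
Proof. intros. unfold uu. apply Rpower_exp_small; lra. Qed.
Lemma uu_big alpha H t x hlo : 1 <= x -> hlo <= H t ->
  uu alpha H t x <= Rpower x (-(/alpha + hlo)).
Proof. intros. unfold uu. apply Rle_Rpower; lra. Qed.

Lemma X1_bound_a alpha H t s x : 0 < x ->
  2 * uu alpha H t x ^2 * (2 - 2 * cos ((t-s)*x)) <=
  (2 * (t-s)^2) * Rpower x (2 - 2*(/alpha + H t)).
Proof. intros. pose proof (W_le_sq ((t-s)*x)).
  unfold uu. rewrite Rpower_sq.
  replace (2 - 2 * (/ alpha + H t)) with (2 * (-(/alpha + H t)) + INR 2) by (simpl; ring).
  rewrite Rpower_plus, Rpower_pow by auto.
  pose proof (Rpower_pos x (2 * - (/ alpha + H t))). nra. Qed.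

Lemma X1_bound_b alpha H t s x :
  2 * uu alpha H t x ^2 * (2 - 2 * cos ((t-s)*x)) <= 8 * Rpower x (-(2*(/alpha + H t))).
Proof. pose proof (W_le_4 ((t-s)*x)). pose proof (W_ge_0 ((t-s)*x)).
  unfold uu. rewrite Rpower_sq. replace (-(2*(/alpha + H t))) with (2 * (-(/alpha + H t))) by ring.
  pose proof (Rpower_pos x (2 * - (/ alpha + H t))). nra. Qed.

Lemma X2_bound_small alpha H t s x hhi T e : 0 < x <= 1 -> H t <= hhi -> H s <= hhi ->
  0 <= s <= T -> 0 < e ->
  2 * (uu alpha H t x - uu alpha H s x)^2 * (2 - 2 * cos (s*x)) <=
  (2 * (H t - H s)^2 * T^2 / e^2) * Rpower x (2 - 2*e - 2*(/alpha + hhi)).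
Proof. intros. set (M := Rpower x (-(/alpha + hhi))).
  assert (Hm : Rmax (uu alpha H t x) (uu alpha H s x) <= M).
  { apply Rmax_lub; apply uu_small; auto. }
  pose proof (u_diff alpha H t s x ltac:(lra)).
  assert (0 <= uu alpha H t x) by (left; apply Rpower_pos).
  assert (0 <= Rmax (uu alpha H t x) (uu alpha H s x)) by (eapply Rle_trans; [|apply Rmax_l]; auto).
  assert (Hd : (uu alpha H t x - uu alpha H s x)^2 <= (H t - H s)^2 * ln x ^2 * M^2).
  { rewrite <- (pow2_abs (uu alpha H t x - _)).
    replace ((H t - H s)^2 * ln x ^2 * M^2) with ((Rabs (H t - H s) * Rabs (ln x) * M)^2)
      by (rewrite !Rpow_mult_distr, !pow2_abs; ring).
    apply pow_incr. split. apply Rabs_pos.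
    eapply Rle_trans; [eauto|]. apply Rmult_le_compat_l; auto.
    apply Rmult_le_pos; apply Rabs_pos. }
  pose proof (ln_bound_small x e H0 H4).
  pose proof (W_le_sq (s*x)). pose proof (W_ge_0 (s*x)).
  assert ((s*x)^2 <= T^2 * x^2). { rewrite Rpow_mult_distr. apply Rmult_le_compat_r. nra. apply pow_incr; lra. }
  assert (Hx2 : x^2 = Rpower x (INR 2)) by (rewrite Rpower_pow; lra).
  assert (HM2 : M^2 = Rpower x (2*(-(/alpha + hhi)))) by (unfold M; apply Rpower_sq).
  assert (HR : Rpower x (2 - 2*e - 2*(/alpha + hhi)) = Rpower x (-(2*e)) * M^2 * x^2).
  { rewrite HM2, Hx2, <- !Rpower_plus. f_equal. simpl; ring. }
  rewrite HR.
  assert (0 <= (H t - H s)^2) by apply pow2_ge_0.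
  assert (0 <= ln x ^ 2) by apply pow2_ge_0.
  assert (0 <= M^2) by apply pow2_ge_0.
  assert (0 <= x^2) by apply pow2_ge_0.
  assert (0 < e^2) by (apply pow_lt; lra).
  pose proof (Rpower_pos x (-(2*e))).
  apply Rle_trans with (2 * ((H t - H s)^2 * ln x ^2 * M^2) * (T^2 * x^2)).
  { pose proof (pow2_ge_0 (uu alpha H t x - uu alpha H s x)). apply Rmult_le_compat; lra. }
  apply Rle_trans with (2 * ((H t - H s)^2 * (Rpower x (- (2 * e)) / e ^ 2) * M^2) * (T^2 * x^2)).
  { apply Rmult_le_compat_r. nra. apply Rmult_le_compat_l. lra.
    apply Rmult_le_compat_r; auto. apply Rmult_le_compat_l; auto. }
  right. field. lra. Qed.

Lemma X2_bound_big alpha H t s x hlo e : 1 <= x -> hlo <= H t -> hlo <= H s -> 0 < e ->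
  2 * (uu alpha H t x - uu alpha H s x)^2 * (2 - 2 * cos (s*x)) <=
  (8 * (H t - H s)^2 / e^2) * Rpower x (2*e - 2*(/alpha + hlo)).
Proof. intros. set (M := Rpower x (-(/alpha + hlo))).
  assert (Hm : Rmax (uu alpha H t x) (uu alpha H s x) <= M).
  { apply Rmax_lub; apply uu_big; auto. }
  pose proof (u_diff alpha H t s x ltac:(lra)).
  assert (0 <= uu alpha H t x) by (left; apply Rpower_pos).
  assert (0 <= Rmax (uu alpha H t x) (uu alpha H s x)) by (eapply Rle_trans; [|apply Rmax_l]; auto).
  assert (Hd : (uu alpha H t x - uu alpha H s x)^2 <= (H t - H s)^2 * ln x ^2 * M^2).
  { rewrite <- (pow2_abs (uu alpha H t x - _)).
    replace ((H t - H s)^2 * ln x ^2 * M^2) with ((Rabs (H t - H s) * Rabs (ln x) * M)^2)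
      by (rewrite !Rpow_mult_distr, !pow2_abs; ring).
    apply pow_incr. split. apply Rabs_pos.
    eapply Rle_trans; [eauto|]. apply Rmult_le_compat_l; auto.
    apply Rmult_le_pos; apply Rabs_pos. }
  pose proof (ln_bound_big x e H0 H3).
  pose proof (W_le_4 (s*x)). pose proof (W_ge_0 (s*x)).
  assert (HM2 : M^2 = Rpower x (2*(-(/alpha + hlo)))) by (unfold M; apply Rpower_sq).
  assert (HR : Rpower x (2*e - 2*(/alpha + hlo)) = Rpower x (2*e) * M^2).
  { rewrite HM2, <- !Rpower_plus. f_equal. ring. }
  rewrite HR.
  assert (0 <= (H t - H s)^2) by apply pow2_ge_0.
  assert (0 <= ln x ^ 2) by apply pow2_ge_0.
  assert (0 <= M^2) by apply pow2_ge_0.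
  assert (0 < e^2) by (apply pow_lt; lra).
  pose proof (Rpower_pos x (2*e)).
  apply Rle_trans with (2 * ((H t - H s)^2 * ln x ^2 * M^2) * 4).
  { pose proof (pow2_ge_0 (uu alpha H t x - uu alpha H s x)). apply Rmult_le_compat; lra. }
  apply Rle_trans with (2 * ((H t - H s)^2 * (Rpower x (2 * e) / e ^ 2) * M^2) * 4).
  { apply Rmult_le_compat_r. lra. apply Rmult_le_compat_l. lra.
    apply Rmult_le_compat_r; auto. apply Rmult_le_compat_l; auto. }
  right. field. lra. Qed.

Lemma gen_bound S X1 X2 A1 A2 x e1 e2 c : 0 < x -> 0 <= S -> 0 <= X1 -> 0 <= X2 ->
  S <= X1 + X2 -> X1 <= A1 * Rpower x e1 -> X2 <= A2 * Rpower x e2 ->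
  0 <= A1 -> 0 <= A2 -> 0 < c <= 1 ->
  rpow0 S c <= (2 * rpow0 A1 c) * Rpower x (e1*c) + (2 * rpow0 A2 c) * Rpower x (e2*c).
Proof. intros.
  assert (K : forall X A e, 0 <= X -> 0 <= A -> X <= A * Rpower x e ->
     rpow0 X c <= rpow0 A c * Rpower x (e*c)).
  { intros X A e HX HA HXA. eapply Rle_trans. apply rp_le. lra. split; eauto.
    rewrite rp_mul by (auto; left; apply Rpower_pos).
    rewrite (rp_pos (Rpower x e)) by apply Rpower_pos. rewrite Rpower_mult. lra. }
  eapply Rle_trans. apply rp_le. lra. split; eauto.
  eapply Rle_trans. apply rp_sum; auto. lra.
  pose proof (K X1 A1 e1 H1 H6 H4). pose proof (K X2 A2 e2 H2 H7 H5). lra. Qed.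

Definition ee (hlo hhi : R) := Rmin hlo (1 - hhi) / 2.

Definition Good alpha (H : R -> R) hlo hhi T t s :=
  1 < alpha < 2 /\ 0 < hlo /\ hhi < 1 /\ hlo <= H t <= hhi /\ hlo <= H s <= hhi /\
  0 <= s <= T /\ 0 < Rabs (t - s) < 1.

Lemma ee_facts hlo hhi : 0 < hlo -> hhi < 1 ->
  0 < ee hlo hhi /\ ee hlo hhi < hlo /\ ee hlo hhi < 1 - hhi.
Proof. intros. unfold ee, Rmin. destruct Rle_dec; lra. Qed.

Lemma X1_nonneg alpha H t s x : 0 <= 2 * uu alpha H t x ^2 * (2 - 2 * cos ((t-s)*x)).
Proof. pose proof (W_ge_0 ((t-s)*x)). pose proof (pow2_ge_0 (uu alpha H t x)). nra. Qed.
Lemma X2_nonneg alpha H t s x : 0 <= 2 * (uu alpha H t x - uu alpha H s x)^2 * (2 - 2 * cos (s*x)).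
Proof. pose proof (W_ge_0 (s*x)). pose proof (pow2_ge_0 (uu alpha H t x - uu alpha H s x)). nra. Qed.

Lemma pt_reg1 alpha H hlo hhi T t s x : Good alpha H hlo hhi T t s -> 0 < x <= 1 ->
  rhmsp_integrand alpha H t s x <=
   (2 * rpow0 (2*(t-s)^2) (alpha/2)) * Rpower x ((2 - 2*(/alpha + H t))*(alpha/2)) +
   (2 * rpow0 (2 * (H t - H s)^2 * T^2 / ee hlo hhi^2) (alpha/2)) *
      Rpower x ((2 - 2*ee hlo hhi - 2*(/alpha + hhi))*(alpha/2)).
Proof. intros [Ha [Hlo [Hhi [Ht [Hs [HsT Hh]]]]]] Hx.
  destruct (ee_facts hlo hhi Hlo Hhi) as [He _].
  rewrite integrand_eq. apply gen_bound with (X1 := 2 * uu alpha H t x ^2 * (2 - 2 * cos ((t-s)*x)))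
    (X2 := 2 * (uu alpha H t x - uu alpha H s x)^2 * (2 - 2 * cos (s*x))).
  lra. apply SS_nonneg. apply X1_nonneg. apply X2_nonneg. apply SS_upper; lra.
  apply X1_bound_a; lra. apply X2_bound_small; lra.
  pose proof (pow2_ge_0 (t-s)); lra.
  pose proof (pow2_ge_0 (H t - H s)). pose proof (pow2_ge_0 T).
  assert (0 < ee hlo hhi ^2) by (apply pow_lt; lra). unfold Rdiv.
  apply Rmult_le_pos. nra. left; apply Rinv_0_lt_compat; auto. lra. Qed.

Lemma pt_reg2 alpha H hlo hhi T t s x : Good alpha H hlo hhi T t s -> 1 <= x ->
  rhmsp_integrand alpha H t s x <=
   (2 * rpow0 (2*(t-s)^2) (alpha/2)) * Rpower x ((2 - 2*(/alpha + H t))*(alpha/2)) +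
   (2 * rpow0 (8 * (H t - H s)^2 / ee hlo hhi^2) (alpha/2)) *
      Rpower x ((2*ee hlo hhi - 2*(/alpha + hlo))*(alpha/2)).
Proof. intros [Ha [Hlo [Hhi [Ht [Hs [HsT Hh]]]]]] Hx.
  destruct (ee_facts hlo hhi Hlo Hhi) as [He _].
  rewrite integrand_eq. apply gen_bound with (X1 := 2 * uu alpha H t x ^2 * (2 - 2 * cos ((t-s)*x)))
    (X2 := 2 * (uu alpha H t x - uu alpha H s x)^2 * (2 - 2 * cos (s*x))).
  lra. apply SS_nonneg. apply X1_nonneg. apply X2_nonneg. apply SS_upper; lra.
  apply X1_bound_a; lra. apply X2_bound_big; lra.
  pose proof (pow2_ge_0 (t-s)); lra.
  pose proof (pow2_ge_0 (H t - H s)).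
  assert (0 < ee hlo hhi ^2) by (apply pow_lt; lra). unfold Rdiv.
  apply Rmult_le_pos. nra. left; apply Rinv_0_lt_compat; auto. lra. Qed.

Lemma pt_reg3 alpha H hlo hhi T t s x : Good alpha H hlo hhi T t s -> 1 <= x ->
  rhmsp_integrand alpha H t s x <=
   (2 * rpow0 8 (alpha/2)) * Rpower x ((-(2*(/alpha + H t)))*(alpha/2)) +
   (2 * rpow0 (8 * (H t - H s)^2 / ee hlo hhi^2) (alpha/2)) *
      Rpower x ((2*ee hlo hhi - 2*(/alpha + hlo))*(alpha/2)).
Proof. intros [Ha [Hlo [Hhi [Ht [Hs [HsT Hh]]]]]] Hx.
  destruct (ee_facts hlo hhi Hlo Hhi) as [He _].
  rewrite integrand_eq. apply gen_bound with (X1 := 2 * uu alpha H t x ^2 * (2 - 2 * cos ((t-s)*x)))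
    (X2 := 2 * (uu alpha H t x - uu alpha H s x)^2 * (2 - 2 * cos (s*x))).
  lra. apply SS_nonneg. apply X1_nonneg. apply X2_nonneg. apply SS_upper; lra.
  apply X1_bound_b; lra. apply X2_bound_big; lra.
  lra.
  pose proof (pow2_ge_0 (H t - H s)).
  assert (0 < ee hlo hhi ^2) by (apply pow_lt; lra). unfold Rdiv.
  apply Rmult_le_pos. nra. left; apply Rinv_0_lt_compat; auto. lra. Qed.

Lemma Rpower_1_base y : Rpower 1 y = 1.
Proof. unfold Rpower. rewrite ln_1, Rmult_0_r. apply exp_0. Qed.

Lemma rp_sq y c : 0 <= y -> rpow0 (y^2) c = rpow0 y (2*c).
Proof. intros. destruct (Req_dec y 0). subst. rewrite pow_i by (apply Nat.lt_0_succ). rewrite !rp_0. auto.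
  replace (y^2) with (rpow0 y 2). apply rp_rp; auto.
  rewrite rp_pos by lra. replace 2 with (INR 2) by (simpl; ring). apply Rpower_pow; lra. Qed.

Lemma sq_abs a : a^2 = Rabs a ^ 2.
Proof. rewrite pow2_abs. auto. Qed.

Lemma Kmul_le K F B : 0 <= K -> F <= B -> K * F <= K * B.
Proof. intros. apply Rmult_le_compat_l; auto. Qed.

Lemma int_reg1 alpha H hlo hhi T t s a b : Good alpha H hlo hhi T t s -> 0 < a <= b -> b <= 1 ->
  RInt (rhmsp_integrand alpha H t s) a b <=
  4 * rpow0 (Rabs (t-s)) (alpha * H t) / (alpha * (1 - hhi)) +
  2 * rpow0 (2 * T^2 / ee hlo hhi ^2) (alpha/2) * rpow0 ((H t - H s)^2) (alpha/2)
     / (alpha * (1 - ee hlo hhi - hhi)).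
Proof. intros G Hab Hb.
  pose proof G as [Ha [Hlo [Hhi [Ht [Hs [HsT Hh]]]]]].
  destruct (ee_facts hlo hhi Hlo Hhi) as [He1 [He2 He3]].
  set (e := ee hlo hhi) in *.
  set (r1 := (2 - 2*(/alpha + H t))*(alpha/2)).
  set (r2 := (2 - 2*e - 2*(/alpha + hhi))*(alpha/2)).
  assert (E1 : r1 + 1 = alpha * (1 - H t)) by (unfold r1; field; lra).
  assert (E2 : r2 + 1 = alpha * (1 - e - hhi)) by (unfold r2; field; lra).
  assert (P1 : 0 < alpha * (1 - H t)) by (apply Rmult_lt_0_compat; lra).
  assert (P2 : 0 < alpha * (1 - e - hhi)) by (apply Rmult_lt_0_compat; lra).
  eapply Rle_trans.
  { apply (RInt_bound2 _ a b (2 * rpow0 (2*(t-s)^2) (alpha/2))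
      (2 * rpow0 (2 * (H t - H s)^2 * T^2 / e^2) (alpha/2)) r1 r2); auto.
    apply exR; auto. intros; apply cont_integrand; lra. lra. lra.
    intros x Hx. apply pt_reg1 with (T := T); auto; lra. }
  assert (F1 : F a b r1 <= 1 / (alpha * (1 - H t))).
  { eapply Rle_trans. apply F_up with (c := 1); lra. rewrite Rpower_1_base, E1. lra. }
  assert (F2 : F a b r2 <= 1 / (alpha * (1 - e - hhi))).
  { eapply Rle_trans. apply F_up with (c := 1); lra. rewrite Rpower_1_base, E2. lra. }
  assert (K1 : 2 * rpow0 (2 * (t - s) ^ 2) (alpha / 2) <= 4 * rpow0 (Rabs (t-s)) (alpha * H t)).
  { rewrite rp_mul by (try lra; apply pow2_ge_0). rewrite sq_abs, rp_sq by apply Rabs_pos.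
    replace (2 * (alpha/2)) with alpha by field.
    pose proof (rp_two_le (alpha/2) ltac:(lra)). pose proof (rp_nonneg 2 (alpha/2)).
    pose proof (rp_le_exp_small (Rabs (t-s)) (alpha * H t) alpha ltac:(lra) ltac:(nra)).
    pose proof (rp_nonneg (Rabs (t-s)) alpha). nra. }
  assert (K2 : rpow0 (2 * (H t - H s) ^ 2 * T ^ 2 / e ^ 2) (alpha / 2) =
      rpow0 (2 * T^2 / e ^2) (alpha/2) * rpow0 ((H t - H s)^2) (alpha/2)).
  { rewrite <- rp_mul. f_equal. field. lra.
    pose proof (pow2_ge_0 T). assert (0 < e^2) by (apply pow_lt; lra).
    apply Rmult_le_pos. lra. left; apply Rinv_0_lt_compat; auto. apply pow2_ge_0. }
  rewrite K2.
  pose proof (rp_nonneg (2 * (t - s) ^ 2) (alpha / 2)).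
  pose proof (rp_nonneg (2 * T^2 / e ^2) (alpha/2)).
  pose proof (rp_nonneg ((H t - H s)^2) (alpha/2)).
  pose proof (rp_nonneg (Rabs (t-s)) (alpha * H t)).
  assert (F0a : 0 <= F a b r1). { unfold F. apply Rmult_le_pos. pose proof (Rle_Rpower_l a b (r1+1)). lra.
    left; apply Rinv_0_lt_compat; lra. }
  apply Rplus_le_compat.
  - apply Rle_trans with (4 * rpow0 (Rabs (t - s)) (alpha * H t) * (1 / (alpha * (1 - H t)))).
    apply Rmult_le_compat; lra.
    unfold Rdiv. rewrite Rmult_1_l. apply Rmult_le_compat_l. lra.
    apply Rinv_le_contravar. apply Rmult_lt_0_compat; lra. nra.
  - apply Rle_trans with (2 * (rpow0 (2 * T ^ 2 / e ^ 2) (alpha / 2) *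
      rpow0 ((H t - H s) ^ 2) (alpha / 2)) * (1 / (alpha * (1 - e - hhi)))).
    apply Rmult_le_compat_l; [nra|exact F2]. right; field; lra. Qed.

Lemma Rpower_inv_rp h y : 0 < h -> Rpower (/h) y = rpow0 h (-y).
Proof. intros. rewrite Rpower_inv by auto. rewrite rp_pos; auto. Qed.

Lemma int_reg2 alpha H hlo hhi T t s a b : Good alpha H hlo hhi T t s -> 1 <= a <= b ->
  b <= / Rabs (t-s) ->
  RInt (rhmsp_integrand alpha H t s) a b <=
  4 * rpow0 (Rabs (t-s)) (alpha * H t) / (alpha * (1 - hhi)) +
  2 * rpow0 (8 / ee hlo hhi ^2) (alpha/2) * rpow0 ((H t - H s)^2) (alpha/2)
     / (alpha * (hlo - ee hlo hhi)).
Proof. intros G Hab Hb.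
  pose proof G as [Ha [Hlo [Hhi [Ht [Hs [HsT Hh]]]]]].
  destruct (ee_facts hlo hhi Hlo Hhi) as [He1 [He2 He3]].
  set (e := ee hlo hhi) in *. set (h := Rabs (t-s)) in *.
  set (r1 := (2 - 2*(/alpha + H t))*(alpha/2)).
  set (r2 := (2*e - 2*(/alpha + hlo))*(alpha/2)).
  assert (E1 : r1 + 1 = alpha * (1 - H t)) by (unfold r1; field; lra).
  assert (E2 : r2 + 1 = - (alpha * (hlo - e))) by (unfold r2; field; lra).
  assert (P1 : 0 < alpha * (1 - H t)) by (apply Rmult_lt_0_compat; lra).
  assert (P2 : 0 < alpha * (hlo - e)) by (apply Rmult_lt_0_compat; lra).
  eapply Rle_trans.
  { apply (RInt_bound2 _ a b (2 * rpow0 (2*(t-s)^2) (alpha/2))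
      (2 * rpow0 (8 * (H t - H s)^2 / e^2) (alpha/2)) r1 r2); auto.
    lra. apply exR; auto. intros; apply cont_integrand; lra. lra. lra. lra.
    intros x Hx. apply pt_reg2 with (T := T); auto; lra. }
  assert (F1 : F a b r1 <= rpow0 h (- (alpha * (1 - H t))) / (alpha * (1 - H t))).
  { eapply Rle_trans. apply F_up with (c := /h); lra. rewrite Rpower_inv_rp, E1 by lra. lra. }
  assert (F2 : F a b r2 <= 1 / (alpha * (hlo - e))).
  { eapply Rle_trans. apply F_down with (c := 1); lra. rewrite Rpower_1_base, E2. right; field; lra. }
  assert (K1 : 2 * rpow0 (2 * (t - s) ^ 2) (alpha / 2) <= 4 * rpow0 h alpha).
  { rewrite rp_mul by (try lra; apply pow2_ge_0). rewrite sq_abs, rp_sq by apply Rabs_pos.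
    replace (2 * (alpha/2)) with alpha by field.
    pose proof (rp_two_le (alpha/2) ltac:(lra)). pose proof (rp_nonneg 2 (alpha/2)).
    pose proof (rp_nonneg (Rabs (t-s)) alpha). unfold h. nra. }
  assert (Eh : rpow0 h alpha * rpow0 h (- (alpha * (1 - H t))) = rpow0 h (alpha * H t)).
  { rewrite <- rp_plus by lra. f_equal. ring. }
  assert (K2 : rpow0 (8 * (H t - H s) ^ 2 / e ^ 2) (alpha / 2) =
      rpow0 (8 / e ^2) (alpha/2) * rpow0 ((H t - H s)^2) (alpha/2)).
  { rewrite <- rp_mul. f_equal. field. lra.
    assert (0 < e^2) by (apply pow_lt; lra).
    apply Rmult_le_pos. lra. left; apply Rinv_0_lt_compat; auto. apply pow2_ge_0. }
  rewrite K2.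
  pose proof (rp_nonneg (2 * (t - s) ^ 2) (alpha / 2)).
  pose proof (rp_nonneg (8 / e ^2) (alpha/2)).
  pose proof (rp_nonneg ((H t - H s)^2) (alpha/2)).
  pose proof (rp_nonneg h (alpha * H t)).
  pose proof (rp_nonneg h (- (alpha * (1 - H t)))).
  pose proof (rp_nonneg h alpha).
  assert (F0a : 0 <= F a b r1). { unfold F. apply Rmult_le_pos. pose proof (Rle_Rpower_l a b (r1+1)). lra.
    left; apply Rinv_0_lt_compat; lra. }
  apply Rplus_le_compat.
  - apply Rle_trans with (4 * rpow0 h alpha * (rpow0 h (- (alpha * (1 - H t))) / (alpha * (1 - H t)))).
    apply Rmult_le_compat; lra.
    replace (4 * rpow0 h alpha * (rpow0 h (- (alpha * (1 - H t))) / (alpha * (1 - H t)))) with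
      (4 * rpow0 h (alpha * H t) * / (alpha * (1 - H t))) by (rewrite <- Eh; field; lra).
    unfold Rdiv. apply Rmult_le_compat_l. lra.
    apply Rinv_le_contravar. apply Rmult_lt_0_compat; lra. nra.
  - apply Rle_trans with (2 * (rpow0 (8 / e ^ 2) (alpha / 2) *
      rpow0 ((H t - H s) ^ 2) (alpha / 2)) * (1 / (alpha * (hlo - e)))).
    apply Rmult_le_compat_l; [nra|exact F2]. right; field; lra. Qed.

Lemma int_reg3 alpha H hlo hhi T t s a b : Good alpha H hlo hhi T t s -> / Rabs (t-s) <= a <= b ->
  RInt (rhmsp_integrand alpha H t s) a b <=
  16 * rpow0 (Rabs (t-s)) (alpha * H t) / (alpha * hlo) +
  2 * rpow0 (8 / ee hlo hhi ^2) (alpha/2) * rpow0 ((H t - H s)^2) (alpha/2)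
     / (alpha * (hlo - ee hlo hhi)).
Proof. intros G Hab.
  pose proof G as [Ha [Hlo [Hhi [Ht [Hs [HsT Hh]]]]]].
  destruct (ee_facts hlo hhi Hlo Hhi) as [He1 [He2 He3]].
  set (e := ee hlo hhi) in *. set (h := Rabs (t-s)) in *.
  assert (Hih : 1 < /h). { rewrite <- Rinv_1. apply Rinv_lt_contravar; lra. }
  set (r1 := (-(2*(/alpha + H t)))*(alpha/2)).
  set (r2 := (2*e - 2*(/alpha + hlo))*(alpha/2)).
  assert (E1 : r1 + 1 = - (alpha * H t)) by (unfold r1; field; lra).
  assert (E2 : r2 + 1 = - (alpha * (hlo - e))) by (unfold r2; field; lra).
  assert (P1 : 0 < alpha * H t) by (apply Rmult_lt_0_compat; lra).
  assert (P2 : 0 < alpha * (hlo - e)) by (apply Rmult_lt_0_compat; lra).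
  eapply Rle_trans.
  { apply (RInt_bound2 _ a b (2 * rpow0 8 (alpha/2))
      (2 * rpow0 (8 * (H t - H s)^2 / e^2) (alpha/2)) r1 r2); auto.
    lra. apply exR; auto. intros; apply cont_integrand; lra. lra. lra. lra.
    intros x Hx. apply pt_reg3 with (T := T); auto; lra. }
  assert (F1 : F a b r1 <= rpow0 h (alpha * H t) / (alpha * H t)).
  { eapply Rle_trans. apply F_down with (c := /h); lra.
    rewrite Rpower_inv_rp, E1 by lra. rewrite Ropp_involutive. lra. }
  assert (F2 : F a b r2 <= 1 / (alpha * (hlo - e))).
  { eapply Rle_trans. apply F_down with (c := /h); lra. rewrite E2.
    assert (Rpower (/h) (- (alpha * (hlo - e))) <= 1).
    { rewrite <- (Rpower_O (/h)) by lra. apply Rle_Rpower; lra. }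
    unfold Rdiv. rewrite Ropp_involutive. apply Rmult_le_compat_r. left; apply Rinv_0_lt_compat; lra. lra. }
  assert (K1 : 2 * rpow0 8 (alpha / 2) <= 16).
  { pose proof (rp_le_exp_big 8 (alpha/2) 1 ltac:(lra) ltac:(lra)). rewrite rp_one in H0 by lra. lra. }
  assert (K2 : rpow0 (8 * (H t - H s) ^ 2 / e ^ 2) (alpha / 2) =
      rpow0 (8 / e ^2) (alpha/2) * rpow0 ((H t - H s)^2) (alpha/2)).
  { rewrite <- rp_mul. f_equal. field. lra.
    assert (0 < e^2) by (apply pow_lt; lra).
    apply Rmult_le_pos. lra. left; apply Rinv_0_lt_compat; auto. apply pow2_ge_0. }
  rewrite K2.
  pose proof (rp_nonneg 8 (alpha / 2)).
  pose proof (rp_nonneg (8 / e ^2) (alpha/2)).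
  pose proof (rp_nonneg ((H t - H s)^2) (alpha/2)).
  pose proof (rp_nonneg h (alpha * H t)).
  assert (F0a : 0 <= F a b r1). { unfold F.
    replace ((Rpower b (r1 + 1) - Rpower a (r1 + 1)) / (r1 + 1)) with
      ((Rpower a (r1 + 1) - Rpower b (r1 + 1)) / (-(r1 + 1))) by (field; lra).
    apply Rmult_le_pos. pose proof (Rpower_anti b a (r1+1)). lra.
    left; apply Rinv_0_lt_compat; lra. }
  apply Rplus_le_compat.
  - apply Rle_trans with (16 * (rpow0 h (alpha * H t) / (alpha * H t))).
    apply Rmult_le_compat; lra.
    unfold Rdiv. rewrite <- Rmult_assoc. apply Rmult_le_compat_l. nra.
    apply Rinv_le_contravar. apply Rmult_lt_0_compat; lra. nra.
  - apply Rle_trans with (2 * (rpow0 (8 / e ^ 2) (alpha / 2) *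
      rpow0 ((H t - H s) ^ 2) (alpha / 2)) * (1 / (alpha * (hlo - e)))).
    apply Rmult_le_compat_l; [nra|exact F2]. right; field; lra. Qed.

Lemma RInt_pt (g : R -> R) a : RInt g a a = 0.
Proof. apply (@RInt_point R_CompleteNormedModule). Qed.

Lemma int_total alpha H hlo hhi T t s a b : Good alpha H hlo hhi T t s -> 0 < a <= b ->
  RInt (rhmsp_integrand alpha H t s) a b <=
  (4 * rpow0 (Rabs (t-s)) (alpha * H t) / (alpha * (1 - hhi)) +
   2 * rpow0 (2 * T^2 / ee hlo hhi ^2) (alpha/2) * rpow0 ((H t - H s)^2) (alpha/2)
     / (alpha * (1 - ee hlo hhi - hhi))) +
  (4 * rpow0 (Rabs (t-s)) (alpha * H t) / (alpha * (1 - hhi)) +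
   2 * rpow0 (8 / ee hlo hhi ^2) (alpha/2) * rpow0 ((H t - H s)^2) (alpha/2)
     / (alpha * (hlo - ee hlo hhi))) +
  (16 * rpow0 (Rabs (t-s)) (alpha * H t) / (alpha * hlo) +
   2 * rpow0 (8 / ee hlo hhi ^2) (alpha/2) * rpow0 ((H t - H s)^2) (alpha/2)
     / (alpha * (hlo - ee hlo hhi))).
Proof. intros G Hab.
  pose proof G as [Ha [Hlo [Hhi [Ht [Hs [HsT Hh]]]]]].
  destruct (ee_facts hlo hhi Hlo Hhi) as [He1 [He2 He3]].
  set (g := rhmsp_integrand alpha H t s).
  assert (Hc : forall x, x <> 0 -> continuous g x) by (intros; apply cont_integrand; lra).
  set (h := Rabs (t-s)) in *.
  assert (Hih : 1 < /h). { rewrite <- Rinv_1. apply Rinv_lt_contravar; lra. }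
  set (c1 := Rmin (Rmax a 1) b). set (c2 := Rmin (Rmax a (/h)) b).
  assert (O1 : a <= c1 <= c2 /\ c2 <= b).
  { unfold c1, c2, Rmin, Rmax. repeat destruct Rle_dec; lra. }
  assert (Hnn : forall U, 0 <= U -> forall a' b', (a' = b' \/ RInt g a' b' <= U) -> RInt g a' b' <= U).
  { intros U HU a' b' [->|HH]; auto. rewrite RInt_pt; auto. }
  assert (N1 : 0 <= 4 * rpow0 h (alpha * H t) / (alpha * (1 - hhi))).
  { pose proof (rp_nonneg h (alpha * H t)). apply Rmult_le_pos. lra. left; apply Rinv_0_lt_compat, Rmult_lt_0_compat; lra. }
  assert (N1' : 0 <= 16 * rpow0 h (alpha * H t) / (alpha * hlo)).
  { pose proof (rp_nonneg h (alpha * H t)). apply Rmult_le_pos. lra. left; apply Rinv_0_lt_compat, Rmult_lt_0_compat; lra. }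
  assert (N2 : forall A B D, 0 < D -> 0 <= 2 * rpow0 A (alpha/2) * rpow0 B (alpha/2) / D).
  { intros. pose proof (rp_nonneg A (alpha/2)). pose proof (rp_nonneg B (alpha/2)).
    apply Rmult_le_pos. nra. left; apply Rinv_0_lt_compat; auto. }
  rewrite <- (@RInt_Chasles R_CompleteNormedModule g a c1 b) by (apply exR; auto; lra).
  rewrite <- (@RInt_Chasles R_CompleteNormedModule g c1 c2 b) by (apply exR; auto; lra).
  unfold plus; simpl. rewrite <- Rplus_assoc.
  apply Rplus_le_compat; [apply Rplus_le_compat|].
  - apply Hnn. apply Rplus_le_le_0_compat; auto. apply N2. apply Rmult_lt_0_compat; lra.
    destruct (Req_dec a c1); [left; auto|right]. apply int_reg1 with (T := T); auto.
    lra. unfold c1 in *. unfold Rmin, Rmax in *. repeat destruct Rle_dec; lra.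
  - apply Hnn. apply Rplus_le_le_0_compat; auto. apply N2. apply Rmult_lt_0_compat; lra.
    destruct (Req_dec c1 c2) as [|Hne]; [left; auto|right]. assert (c1 < c2) by lra. clear Hne. apply int_reg2 with (T := T); auto;
    unfold c1, c2, h in *; unfold Rmin, Rmax in *; repeat destruct Rle_dec; lra.
  - apply Hnn. apply Rplus_le_le_0_compat; auto. apply N2. apply Rmult_lt_0_compat; lra.
    destruct (Req_dec c2 b) as [|Hne]; [left; auto|right]. assert (c2 < b) by lra. clear Hne. apply int_reg3 with (T := T); auto;
    unfold c1, c2, h in *; unfold Rmin, Rmax in *; repeat destruct Rle_dec; lra. Qed.

Lemma exp_small z : Rabs z <= 1/10 -> Rabs (1 - exp z) <= 1/9.
Proof. intros. pose proof (exp_diff 0 z). rewrite exp_0 in H0.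
  assert (exp z <= 10/9).
  { pose proof (exp_ineq1_le (-z)). pose proof (exp_pos z).
    assert (exp z * exp (-z) = 1) by (rewrite <- exp_plus; replace (z + -z) with 0 by ring; apply exp_0).
    assert (Rabs z <= 1/10) by auto. unfold Rabs in H4; destruct Rcase_abs in H4; nra. }
  assert (Rmax 1 (exp z) <= 10/9) by (apply Rmax_lub; lra).
  replace (0 - z) with (-z) in H0 by ring. rewrite Rabs_Ropp in H0.
  pose proof (Rabs_pos z). pose proof (Rabs_pos (1 - exp z)).
  assert (0 <= Rmax 1 (exp z)) by (eapply Rle_trans; [|apply Rmax_l]; lra). nra. Qed.

Lemma pt_lower alpha H hlo hhi T t s x : Good alpha H hlo hhi T t s ->
  Rabs (H t - H s) * ln (2 / Rabs (t-s)) <= 1/10 ->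
  / Rabs (t-s) <= x <= 2 / Rabs (t-s) ->
  rpow0 (Rabs (t-s)) (alpha * H t) * Rabs (t-s) / 40 <= rhmsp_integrand alpha H t s x.
Proof. intros G Hd Hx.
  pose proof G as [Ha [Hlo [Hhi [Ht [Hs [HsT Hh]]]]]].
  set (h := Rabs (t-s)) in *.
  assert (Hih : 1 < /h). { rewrite <- Rinv_1. apply Rinv_lt_contravar; lra. }
  assert (Hx0 : 0 < x) by lra.
  set (u := uu alpha H t x). set (v := uu alpha H s x).
  assert (Hu : 0 < u) by apply Rpower_pos.
  assert (Hv : v = u * exp ((H t - H s) * ln x)).
  { unfold v, u, uu, Rpower. rewrite <- exp_plus. f_equal. ring. }
  assert (Hz : Rabs ((H t - H s) * ln x) <= 1/10).
  { rewrite Rabs_mult. eapply Rle_trans; [|exact Hd]. apply Rmult_le_compat_l. apply Rabs_pos.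
    assert (0 <= ln x). { rewrite <- ln_1. apply ln_le; lra. }
    rewrite Rabs_right by lra. apply ln_le; lra. }
  pose proof (exp_small _ Hz) as Hez.
  assert (Huv : (u - v)^2 <= u^2 / 81).
  { rewrite Hv. replace (u - u * exp ((H t - H s) * ln x)) with (u * (1 - exp ((H t - H s) * ln x))) by ring.
    rewrite Rpow_mult_distr. rewrite (sq_abs (1 - _)).
    assert (Rabs (1 - exp ((H t - H s) * ln x)) ^2 <= (1/9)^2).
    { apply pow_incr. split. apply Rabs_pos. auto. }
    pose proof (pow2_ge_0 u). nra. }
  assert (HW1 : 4/5 <= 2 - 2 * cos ((t-s)*x)).
  { apply W_ge. rewrite Rabs_mult. fold h. rewrite (Rabs_right x) by lra.
    assert (h * /h = 1) by (field; lra).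
    replace (2 / h) with (2 * /h) in Hx by (unfold Rdiv; ring). split; nra. }
  assert (HS : u^2 / 5 <= SS alpha H t s x).
  { eapply Rle_trans; [|apply SS_lower; lra]. fold u v.
    pose proof (W_le_4 (s*x)). pose proof (W_ge_0 (s*x)). pose proof (pow2_ge_0 u).
    pose proof (pow2_ge_0 (u-v)). nra. }
  rewrite integrand_eq.
  eapply Rle_trans; [|apply rp_le; [lra|split; [|exact HS]]].
  2:{ pose proof (pow2_ge_0 u). lra. }
  unfold Rdiv at 2. rewrite Rmult_comm, rp_mul by (try lra; apply pow2_ge_0).
  rewrite rp_sq by lra. replace (2 * (alpha/2)) with alpha by field.
  assert (R5 : 1/5 <= rpow0 (/5) (alpha/2)).
  { pose proof (rp_le_exp_small (/5) (alpha/2) 1 ltac:(lra) ltac:(lra)). rewrite rp_one in H0 by lra. lra. }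
  assert (Rux : rpow0 u alpha = Rpower x (-(1 + alpha * H t))).
  { unfold u, uu. rewrite rp_pos by apply Rpower_pos. rewrite Rpower_mult. f_equal. field. lra. }
  rewrite Rux.
  assert (Ra : Rpower (2/h) (-(1 + alpha * H t)) <= Rpower x (-(1 + alpha * H t))).
  { apply Rpower_anti. lra. nra. }
  assert (Rb : Rpower (2/h) (-(1 + alpha * H t)) = rpow0 h (alpha * H t) * h * / Rpower 2 (1 + alpha * H t)).
  { unfold Rdiv. rewrite <- Rpower_mult_distr by (try lra; apply Rinv_0_lt_compat; lra).
    rewrite Rpower_Ropp. rewrite Rpower_inv_rp by lra. rewrite Ropp_involutive.
    rewrite rp_plus by lra. rewrite rp_one by lra. ring. }
  assert (R8 : Rpower 2 (1 + alpha * H t) <= 8).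
  { replace 8 with (Rpower 2 3). apply Rle_Rpower; nra.
    replace 3 with (INR 3) by (simpl; ring). rewrite Rpower_pow by lra. simpl; ring. }
  pose proof (Rpower_pos 2 (1 + alpha * H t)).
  pose proof (rp_nonneg h (alpha * H t)).
  assert (/8 <= / Rpower 2 (1 + alpha * H t)) by (apply Rinv_le_contravar; lra).
  assert (rpow0 h (alpha * H t) * h / 40 <= Rpower (2 / h) (- (1 + alpha * H t)) / 5).
  { rewrite Rb. assert (0 <= rpow0 h (alpha * H t) * h) by nra. nra. }
  pose proof (Rpower_pos x (- (1 + alpha * H t))). nra. Qed.

Lemma int_lower alpha H hlo hhi T t s : Good alpha H hlo hhi T t s ->
  Rabs (H t - H s) * ln (2 / Rabs (t-s)) <= 1/10 ->
  rpow0 (Rabs (t-s)) (alpha * H t) / 40 <=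
  RInt (rhmsp_integrand alpha H t s) (/ Rabs (t-s)) (2 / Rabs (t-s)).
Proof. intros G Hd.
  pose proof G as [Ha [Hlo [Hhi [Ht [Hs [HsT Hh]]]]]].
  set (h := Rabs (t-s)) in *.
  assert (Hih : 1 < /h). { rewrite <- Rinv_1. apply Rinv_lt_contravar; lra. }
  assert (E2 : 2 / h = 2 * / h) by (unfold Rdiv; ring).
  set (m := rpow0 h (alpha * H t) * h / 40).
  assert (HR : RInt (fun _ => m) (/h) (2/h) = rpow0 h (alpha * H t) / 40).
  { rewrite RInt_const. unfold scal; simpl; unfold mult; simpl. unfold m. field. lra. }
  rewrite <- HR. apply RInt_le. rewrite E2; lra.
  apply ex_RInt_const.
  apply exR. intros; apply cont_integrand; lra. lra.
  intros x Hx. apply pt_lower with (hlo := hlo) (hhi := hhi) (T := T); auto. fold h. lra. Qed.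

Lemma ln_le_pow y e : 1 <= y -> 0 < e -> ln y <= Rpower y e / e.
Proof. intros.
  assert (e * ln y <= Rpower y e).
  { rewrite <- ln_Rpower. pose proof (exp_ineq1_le (ln (Rpower y e))).
    rewrite exp_ln in H1 by apply Rpower_pos. lra. }
  apply (Rmult_le_reg_l e); auto. field_simplify; lra. Qed.

Lemma hg_ln h g : 0 < h < 1 -> 0 < g -> Rpower h g * (- ln h) <= / g.
Proof. intros.
  assert (- g * ln h <= Rpower h (-g)).
  { rewrite <- ln_Rpower. pose proof (exp_ineq1_le (ln (Rpower h (-g)))).
    rewrite exp_ln in H1 by apply Rpower_pos. lra. }
  rewrite Rpower_Ropp in H1. pose proof (Rpower_pos h g).
  apply (Rmult_le_reg_l g); auto. rewrite Rinv_r by lra.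
  apply (Rmult_le_reg_r (/ Rpower h g)). apply Rinv_0_lt_compat; auto.
  replace (g * (Rpower h g * - ln h) * / Rpower h g) with (- g * ln h) by (field; lra). lra. Qed.

Lemma expfac h d K g a : 0 < h < 1 -> 0 < g -> 0 < a -> 0 <= d <= K * Rpower h g -> 0 <= K ->
  rpow0 h (-(a*d)) <= exp (a*K/g).
Proof. intros. rewrite rp_pos by lra. unfold Rpower. apply exp_le.
  pose proof (hg_ln h g H H0).
  assert (0 <= - ln h). { assert (ln h < 0) by (rewrite <- ln_1; apply ln_increasing; lra). lra. }
  apply Rle_trans with (a * (K * Rpower h g * (- ln h))).
  replace (- (a * d) * ln h) with (a * (d * (- ln h))) by ring.
  apply Rmult_le_compat_l. lra. apply Rmult_le_compat_r; lra.
  replace (a * K / g) with (a * (K * / g)) by (field; lra).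
  apply Rmult_le_compat_l. lra. rewrite Rmult_assoc. apply Rmult_le_compat_l; auto. Qed.

Lemma expfac_low h d K g a : 0 < h < 1 -> 0 < g -> 0 < a -> 0 <= d <= K * Rpower h g -> 0 <= K ->
  / exp (a*K/g) <= rpow0 h (a*d).
Proof. intros. pose proof (expfac h d K g a H H0 H1 H2 H3).
  rewrite <- (Ropp_involutive (a*d)). rewrite rp_opp by lra.
  apply Rinv_le_contravar; auto. apply rp_lt_one_pos; lra. Qed.

Lemma zero_case alpha H s : 1 < alpha < 2 ->
  exists N, rhmsp_incr_norm alpha H s s N /\ N = 0.
Proof. intros Ha.
  set (g := rhmsp_integrand alpha H s s).
  assert (Hg0 : forall x, g x = 0).
  { intros. unfold g. rewrite integrand_eq. unfold SS. rewrite !Rminus_diag.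
    replace (0^2 + 0^2) with 0 by ring. apply rp_0. }
  destruct (improper g 0) as [L [HL1 [HL2 HL3]]].
  intros; apply cont_integrand; lra.
  intros; rewrite !Hg0; auto. intros; rewrite Hg0; lra.
  intros. rewrite (RInt_ext _ (fun _ => 0)). rewrite RInt_const. unfold scal; simpl; unfold mult; simpl. lra.
  intros; apply Hg0.
  assert (L = 0). { pose proof (HL3 1 1 ltac:(lra)). rewrite RInt_pt in H0. lra. }
  exists (rpow0 L (/alpha)). split. exists L; split; auto. subst. apply rp_0. Qed.

Lemma hold_interval (H : R -> R) C g t s u : 0 <= t -> 0 <= s -> 0 < C ->
  (forall t s, 0 <= t -> 0 <= s -> Rabs (H t - H s) <= C * Rpower (Rabs (t - s)) g) ->
  0 < g -> t <> s -> Rmin s t <= u <= Rmax s t ->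
  Rabs (H u - H t) <= C * Rpower (Rabs (t - s)) g.
Proof. intros Ht Hs HC Hhol Hg Hne Hu.
  assert (0 <= u) by (unfold Rmin in Hu; destruct Rle_dec; lra).
  destruct (Req_dec u t) as [->|Hut].
  - rewrite Rminus_diag, Rabs_R0. pose proof (Rpower_pos (Rabs (t-s)) g). nra.
  - eapply Rle_trans. apply Hhol; auto. apply Rmult_le_compat_l. lra.
    apply Rle_Rpower_l. lra. split. apply Rabs_pos_lt; lra.
    unfold Rmin, Rmax in Hu. unfold Rabs. repeat destruct Rcase_abs; destruct Rle_dec in Hu; lra. Qed.

Theorem mainTheorem3 (alpha : R) (H : R -> R) (T : R)
  (halpha : 1 < alpha < 2)
  (hHbounds : exists hlo hhi, 0 < hlo /\ hhi < 1 /\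
                forall t, 0 <= t -> hlo <= H t <= hhi)
  (hHolder : exists C gamma, 0 < C /\
               (exists m, m < gamma /\ forall t, 0 <= t -> H t <= m) /\
               forall t s, 0 <= t -> 0 <= s ->
                 Rabs (H t - H s) <= C * Rpower (Rabs (t - s)) gamma)
  (hT : 0 < T) :
  exists delta C1 C2, 0 < delta /\ 0 < C1 /\ 0 < C2 /\
    forall t s, 0 <= t <= T -> 0 <= s <= T -> Rabs (t - s) < delta ->
      forall hmin hmax,
        IsMinOn H (Rmin s t) (Rmax s t) hmin ->
        IsMaxOn H (Rmin s t) (Rmax s t) hmax ->
        exists N, rhmsp_incr_norm alpha H t s N /\
          C1 * rpow0 (Rabs (t - s)) hmin <= N /\
          N <= C2 * rpow0 (Rabs (t - s)) hmax.
Proof.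
  destruct hHbounds as [hlo [hhi [Hlo [Hhi HB]]]].
  destruct hHolder as [C [g [HC [[m [Hmg Hm]] Hhol]]]].
  assert (Hg : 0 < g). { pose proof (Hm 0 ltac:(lra)). pose proof (HB 0 ltac:(lra)). lra. }
  destruct (ee_facts hlo hhi Hlo Hhi) as [He1 [He2 He3]].
  set (e := ee hlo hhi) in *.
  set (K1 := 8 / (alpha * (1 - hhi)) + 16 / (alpha * hlo)).
  set (K2 := 2 * rpow0 (2 * T^2 / e^2) (alpha/2) / (alpha * (1 - e - hhi)) +
             4 * rpow0 (8 / e^2) (alpha/2) / (alpha * (hlo - e))).
  set (E := exp (alpha * C / g)).
  set (KU := 2 * (K1 * E + K2 * rpow0 C alpha)).
  set (KL := / (20 * E)).
  set (A := (2 * C / g) * Rpower 2 (g/2)).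
  set (d0 := / (10 * A)).
  set (delta := Rmin 1 (Rpower d0 (2/g))).
  assert (HE : 0 < E) by apply exp_pos.
  assert (HK1 : 0 < K1).
  { unfold K1. assert (0 < alpha * (1 - hhi)) by (apply Rmult_lt_0_compat; lra).
    assert (0 < alpha * hlo) by (apply Rmult_lt_0_compat; lra).
    pose proof (Rinv_0_lt_compat _ H0). pose proof (Rinv_0_lt_compat _ H1). unfold Rdiv. lra. }
  assert (HK2 : 0 <= K2).
  { unfold K2. assert (0 < alpha * (1 - e - hhi)) by (apply Rmult_lt_0_compat; lra).
    assert (0 < alpha * (hlo - e)) by (apply Rmult_lt_0_compat; lra).
    pose proof (Rinv_0_lt_compat _ H0). pose proof (Rinv_0_lt_compat _ H1).
    pose proof (rp_nonneg (2 * T^2 / e^2) (alpha/2)). pose proof (rp_nonneg (8 / e^2) (alpha/2)).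
    unfold Rdiv. apply Rplus_le_le_0_compat; apply Rmult_le_pos; nra. }
  pose proof (rp_nonneg C alpha) as HCa.
  assert (HKU : 0 < KU) by (unfold KU; nra).
  assert (HKL : 0 < KL) by (unfold KL; apply Rinv_0_lt_compat; lra).
  assert (HA : 0 < A) by (unfold A; pose proof (Rpower_pos 2 (g/2));
    apply Rmult_lt_0_compat; auto; unfold Rdiv; apply Rmult_lt_0_compat; [lra|apply Rinv_0_lt_compat; lra]).
  assert (Hd0 : 0 < d0) by (unfold d0; apply Rinv_0_lt_compat; lra).
  assert (Hdelta : 0 < delta) by (unfold delta; apply Rmin_pos; [lra|apply Rpower_pos]).
  exists delta, (rpow0 KL (/alpha)), (rpow0 KU (/alpha)).
  split; [auto|split; [apply rp_lt_one_pos; auto|split; [apply rp_lt_one_pos; auto|]]].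
  intros t s Ht Hs Hts hmin hmax Hmin Hmax.
  destruct (Req_dec t s) as [->|Hne].
  { destruct (zero_case alpha H s halpha) as [N [HN ->]]. exists 0. split; auto.
    rewrite Rminus_diag, Rabs_R0, !rp_0. lra. }
  set (h := Rabs (t-s)) in *.
  assert (Hh0 : 0 < h) by (apply Rabs_pos_lt; lra).
  assert (Hh1 : h < 1) by (unfold delta in Hts; pose proof (Rmin_l 1 (Rpower d0 (2/g))); lra).
  assert (G : Good alpha H hlo hhi T t s).
  { pose proof (HB t ltac:(lra)). pose proof (HB s ltac:(lra)).
    unfold Good. fold h. repeat split; lra. }
  assert (Hhol_ts : Rabs (H t - H s) <= C * Rpower h g) by (apply Hhol; lra).
  assert (Hsmall : Rabs (H t - H s) * ln (2 / h) <= 1/10).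
  { assert (Hih : 1 < /h). { rewrite <- Rinv_1. apply Rinv_lt_contravar; lra. }
    assert (Hl : ln (2/h) <= Rpower (2/h) (g/2) / (g/2)) by (apply ln_le_pow; [unfold Rdiv; lra|lra]).
    assert (Hl0 : 0 <= ln (2/h)) by (rewrite <- ln_1; apply ln_le; [lra|unfold Rdiv; lra]).
    assert (Hp : Rpower (2/h) (g/2) = Rpower 2 (g/2) * Rpower h (-(g/2))).
    { unfold Rdiv. rewrite <- Rpower_mult_distr by (try lra; apply Rinv_0_lt_compat; lra).
      rewrite Rpower_inv; auto. }
    assert (Hhd : Rpower h (g/2) < d0).
    { assert (h < Rpower d0 (2/g)) by (unfold delta in Hts; pose proof (Rmin_r 1 (Rpower d0 (2/g))); lra).
      replace d0 with (Rpower (Rpower d0 (2/g)) (g/2)).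
      apply Rlt_Rpower_l; lra. rewrite Rpower_mult. replace (2/g * (g/2)) with 1 by (field; lra).
      apply Rpower_1; auto. }
    assert (Hgg : Rpower h g * Rpower h (-(g/2)) = Rpower h (g/2)).
    { rewrite <- Rpower_plus. f_equal. field. }
    pose proof (Rpower_pos h g). pose proof (Rpower_pos h (-(g/2))). pose proof (Rpower_pos 2 (g/2)).
    pose proof (Rabs_pos (H t - H s)).
    apply Rle_trans with (C * Rpower h g * (Rpower (2 / h) (g / 2) / (g / 2))).
    apply Rmult_le_compat; auto.
    rewrite Hp.
    replace (C * Rpower h g * (Rpower 2 (g / 2) * Rpower h (- (g / 2)) / (g / 2))) with
       (A * (Rpower h g * Rpower h (- (g / 2)))) by (unfold A; field; lra).
    rewrite Hgg. apply Rle_trans with (A * d0). apply Rmult_le_compat_l; lra.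
    unfold d0. right. field. lra. }
  set (Ph := rpow0 h (alpha * H t)).
  set (Pd := rpow0 ((H t - H s)^2) (alpha/2)).
  set (gg := rhmsp_integrand alpha H t s).
  destruct (improper gg (K1 * Ph + K2 * Pd)) as [L [HL1 [HL2 HL3]]].
  { intros; apply cont_integrand; lra. }
  { intros. unfold gg. rewrite !integrand_eq, SS_even. auto. }
  { intros. unfold gg. rewrite integrand_eq. apply rp_nonneg. }
  { intros a b Hab. eapply Rle_trans. apply int_total with (T := T); eauto.
    right. fold e. unfold K1, K2, Ph, Pd, h. field. repeat split; lra. }
  pose proof (int_lower alpha H hlo hhi T t s G Hsmall) as Hlow.
  assert (HLlow : Ph / 20 <= L).
  { pose proof (HL3 (/h) (2/h)). fold h in Hlow. unfold Ph.
    assert (Hih : 1 < /h). { rewrite <- Rinv_1. apply Rinv_lt_contravar; lra. }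
    assert (2 * RInt gg (/h) (2/h) <= L) by (apply H0; unfold Rdiv; lra). unfold gg in H1. lra. }
  destruct Hmax as [[u [Hu Hu2]] Hmax2]. destruct Hmin as [[w [Hw Hw2]] Hmin2].
  assert (Ht_in : Rmin s t <= t <= Rmax s t) by (unfold Rmin, Rmax; destruct Rle_dec; lra).
  pose proof (Hmax2 t Ht_in). pose proof (Hmin2 t Ht_in).
  pose proof (hold_interval H C g t s u ltac:(lra) ltac:(lra) HC Hhol Hg Hne Hu) as Hu3.
  pose proof (hold_interval H C g t s w ltac:(lra) ltac:(lra) HC Hhol Hg Hne Hw) as Hw3.
  fold h in Hu3, Hw3. rewrite Hu2 in Hu3. rewrite Hw2 in Hw3.
  assert (Hu0 : 0 <= u) by (unfold Rmin in Hu; destruct Rle_dec in Hu; lra).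
  assert (Hmaxg : hmax <= m) by (rewrite <- Hu2; apply Hm; auto).
  assert (Hph_up : Ph <= E * rpow0 h (alpha * hmax)).
  { unfold Ph. replace (alpha * H t) with (alpha * hmax + (- (alpha * (hmax - H t)))) by ring.
    rewrite rp_plus by auto. pose proof (rp_nonneg h (alpha * hmax)).
    pose proof (expfac h (hmax - H t) C g alpha ltac:(lra) Hg ltac:(lra)).
    assert (rpow0 h (- (alpha * (hmax - H t))) <= E).
    { apply H3. split. lra. unfold Rabs in Hu3; destruct Rcase_abs in Hu3; lra. lra. }
    nra. }
  assert (Hpd_up : Pd <= rpow0 C alpha * rpow0 h (alpha * hmax)).
  { unfold Pd. rewrite sq_abs, rp_sq by apply Rabs_pos. replace (2 * (alpha/2)) with alpha by field.
    eapply Rle_trans. apply rp_le. lra. split. apply Rabs_pos. exact Hhol_ts.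
    rewrite rp_mul by (try lra; left; apply Rpower_pos).
    rewrite (rp_pos (Rpower h g)) by apply Rpower_pos. rewrite Rpower_mult.
    apply Rmult_le_compat_l; auto. rewrite <- rp_pos by auto. apply rp_le_exp_small. lra. nra. }
  assert (HLup : L <= KU * rpow0 h (alpha * hmax)).
  { pose proof (rp_nonneg ((H t - H s)^2) (alpha/2)). fold Pd in H2.
    unfold KU. apply Rle_trans with (2 * (K1 * Ph + K2 * Pd)). lra.
    pose proof (rp_nonneg h (alpha * hmax)). nra. }
  assert (Hph_low : KL * rpow0 h (alpha * hmin) * 20 <= Ph).
  { unfold Ph. replace (alpha * H t) with (alpha * hmin + alpha * (H t - hmin)) by ring.
    rewrite rp_plus by auto. pose proof (rp_nonneg h (alpha * hmin)).
    pose proof (expfac_low h (H t - hmin) C g alpha ltac:(lra) Hg ltac:(lra)).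
    assert (/ E <= rpow0 h (alpha * (H t - hmin))).
    { apply H3. split. lra. unfold Rabs in Hw3; destruct Rcase_abs in Hw3; lra. lra. }
    unfold KL. rewrite Rinv_mult. replace (/ 20 * / E * rpow0 h (alpha * hmin) * 20) with
      (rpow0 h (alpha * hmin) * / E) by (field; lra). apply Rmult_le_compat_l; auto. }
  exists (rpow0 L (/alpha)). split; [exists L; split; auto|].
  pose proof (rp_nonneg h (alpha * hmin)). pose proof (rp_nonneg h (alpha * hmax)).
  assert (HL0 : 0 <= L) by (pose proof (rp_nonneg h (alpha * H t)); fold Ph in H4; lra).
  split.
  - assert (HLk : KL * rpow0 h (alpha*hmin) <= L) by lra.
    eapply Rle_trans; [|apply rp_le; [left; apply Rinv_0_lt_compat; lra|split; [|exact HLk]]].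
    + rewrite rp_mul by lra. rewrite rp_rp by lra. right. f_equal. f_equal. field. lra.
    + nra.
  - eapply Rle_trans. apply rp_le. left; apply Rinv_0_lt_compat; lra. split; [exact HL0|exact HLup].
    rewrite rp_mul by lra. rewrite rp_rp by lra. right. f_equal. f_equal. field. lra.
Qed.
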